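(* Let $n,T\in\mathbb{N}$ and let real numbers $r_{it}$, $i\in\{1,\ldots,n\}$, $t\in\{1,\ldots,T\}$, be given. Consider the random return vector $\boldsymbol{r}=(r_1,\ldots,r_n)^{\mathsf T}$ which takes the value $(r_{1t},\ldots,r_{nt})^{\mathsf T}$ in scenario $t$, each scenario having probability $1/T$, and let $\mu_i=\frac1T\sum_{t=1}^T r_{it}$, $\boldsymbol{\mu}=(\mu_1,\ldots,\mu_n)^{\mathsf T}$. Define $\mathrm{MAD}(\boldsymbol{x})=\mathbb{E}\big[|(\boldsymbol{r}-\boldsymbol{\mu})^{\mathsf T}\boldsymbol{x}|\big]=\frac1T\sum_{t=1}^T|\sum_{i=1}^n (r_{it}-\mu_i)x_i|$ for $\boldsymbol{x}\in\mathbb{R}^n$, with convex subdifferential $\partial\mathrm{MAD}(\boldsymbol{x})$. Let $\Delta^{n-1}=\{\boldsymbol{x}\in\mathbb{R}^n: x_i\ge0\ \forall i,\ \sum_i x_i=1\}$, and call $\boldsymbol{x}\in\Delta^{n-1}$ a MAD-RP portfolio if there exist $\boldsymbol{s}\in\partial\mathrm{MAD}(\boldsymbol{x})$ and $\lambda\in\mathbb{R}$ with $x_is_i=\lambda$ for all $i$. Suppose that the only vector $\boldsymbol{x}\in\mathbb{R}^n_+$ with $\sum_{i}(r_{it}-\mu_i)x_i=0$ for every $t$ is $\boldsymbol{x}=0$, and suppose moreover that $$(r_{it}-\mu_i)(r_{jt}-\mu_j)\geq 0\quad\text{for every } t\in\{1,\ldots,T\} \text{ and } i,j\in\{1,\ldots,n\},\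 i\neq j.$$ Then the unique MAD-RP portfolio is given by $$x_i=\frac{\mathbb{E}[|r_i-\mu_i|]^{-1}}{\sum_{j=1}^n\mathbb{E}[|r_j-\mu_j|]^{-1}},\qquad i\in\{1,\ldots,n\}.$$
   Context: $\mathbb{R}^n_+$ denotes the set of vectors in $\mathbb{R}^n$ with all components nonnegative; $\mathbb{E}[|r_i-\mu_i|]=\frac1T\sum_{t=1}^T|r_{it}-\mu_i|$. *)

(* Defs.v *)
From HB Require Import structures.
From mathcomp Require Import all_boot all_order all_algebra.
From mathcomp Require Import reals.
Set Implicit Arguments. Unset Strict Implicit. Unset Printing Implicit Defensive.
Import Order.TTheory GRing.Theory Num.Theory.
Local Open Scope ring_scope.

Section Defs.
Variables (R : realType) (n T : nat).
Variable r : 'I_n -> 'I_T -> R.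

Definition mu (i : 'I_n) : R := (\sum_(t < T) r i t) / T%:R.

Definition MAD (x : 'I_n -> R) : R :=
  (\sum_(t < T) `| \sum_(i < n) (r i t - mu i) * x i |) / T%:R.

Definition Emad (i : 'I_n) : R := (\sum_(t < T) `| r i t - mu i |) / T%:R.

End Defs.

Definition subgrad (R : realType) (n : nat) (f : ('I_n -> R) -> R)
  (x s : 'I_n -> R) : Prop :=
  forall y : 'I_n -> R, f x + \sum_(i < n) s i * (y i - x i) <= f y.

Definition in_simplex (R : realType) (n : nat) (x : 'I_n -> R) : Prop :=
  (forall i, 0 <= x i) /\ \sum_(i < n) x i = 1.

Definition MAD_RP (R : realType) (n T : nat) (r : 'I_n -> 'I_T -> R)
  (x : 'I_n -> R) : Prop :=
  in_simplex x /\
  exists s : 'I_n -> R, subgrad (MAD r) x s /\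
    exists lambda : R, forall i, x i * s i = lambda.

(* Main.v *)
Require Import Defs.
From HB Require Import structures.
From mathcomp Require Import all_boot all_order all_algebra.
From mathcomp Require Import reals.
From mathcomp Require Import ring.
Import Order.TTheory GRing.Theory Num.Theory.
Local Open Scope ring_scope.

Section Aux.
Variables (R : realType) (n T : nat) (r : 'I_n -> 'I_T -> R).
Hypothesis hsign : forall (t : 'I_T) (i j : 'I_n), i != j ->
     0 <= (r i t - mu r i) * (r j t - mu r j).

Lemma sgn_ex t : exists sg : R, `|sg| = 1 /\
  forall i, `|r i t - mu r i| = sg * (r i t - mu r i).
Proof.
have [/existsP [i hi]| /existsPn h] := boolP [exists i, 0 < r i t - mu r i].
  exists 1; split; first by rewrite normr1.
  move=> j; rewrite mul1r ger0_norm //.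
  case: (eqVneq i j) => [<-|ne]; first exact: ltW.
  by have := hsign t i j ne; rewrite pmulr_rge0.
exists (-1); split; first by rewrite normrN1.
move=> j; rewrite mulN1r ler0_norm //.
by rewrite leNgt h.
Qed.

Lemma per_t t (y : 'I_n -> R) :
  \sum_i `|r i t - mu r i| * y i <= `| \sum_i (r i t - mu r i) * y i | /\
  ((forall i, 0 <= y i) ->
   \sum_i `|r i t - mu r i| * y i = `| \sum_i (r i t - mu r i) * y i |).
Proof.
have [sg [hsg ha]] := sgn_ex t.
have E : \sum_i `|r i t - mu r i| * y i = sg * \sum_i (r i t - mu r i) * y i.
  rewrite mulr_sumr; apply: eq_bigr => i _; by rewrite ha mulrA.
have N : `| \sum_i (r i t - mu r i) * y i | = `| sg * \sum_i (r i t - mu r i) * y i |.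
  by rewrite normrM hsg mul1r.
rewrite E N; split; first exact: ler_norm.
move=> hy; rewrite ger0_norm // -E.
by apply: sumr_ge0 => i _; apply: mulr_ge0.
Qed.

Lemma MAD_ge (y : 'I_n -> R) : \sum_i Emad r i * y i <= MAD r y.
Proof.
rewrite /MAD /Emad.
have -> : \sum_i (\sum_(t < T) `|r i t - mu r i|) / T%:R * y i =
   (\sum_(t < T) \sum_i `|r i t - mu r i| * y i) / T%:R.
  rewrite [in RHS]exchange_big /= mulr_suml; apply: eq_bigr => i _.
  by rewrite mulrAC mulr_suml.
apply: ler_wpM2r; first by rewrite invr_ge0 ler0n.
by apply: ler_sum => t _; case: (per_t t y).
Qed.

Lemma MAD_eq (y : 'I_n -> R) : (forall i, 0 <= y i) ->
  MAD r y = \sum_i Emad r i * y i.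
Proof.
move=> hy; rewrite /MAD /Emad.
have -> : \sum_i (\sum_(t < T) `|r i t - mu r i|) / T%:R * y i =
   (\sum_(t < T) \sum_i `|r i t - mu r i| * y i) / T%:R.
  rewrite [in RHS]exchange_big /= mulr_suml; apply: eq_bigr => i _.
  by rewrite mulrAC mulr_suml.
congr (_ / _); apply: eq_bigr => t _.
by case: (per_t t y) => _ ->.
Qed.

End Aux.

Theorem proposition3 (R : realType) (n T : nat) (r : 'I_n -> 'I_T -> R)
  (hn : (0 < n)%N)
  (hnondeg : forall x : 'I_n -> R, (forall i, 0 <= x i) ->
     (forall t : 'I_T, \sum_(i < n) (r i t - mu r i) * x i = 0) ->
     forall i, x i = 0)
  (hsign : forall (t : 'I_T) (i j : 'I_n), i != j ->
     0 <= (r i t - mu r i) * (r j t - mu r j)) :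
  forall x : 'I_n -> R,
    MAD_RP r x <->
    (forall i, x i = (Emad r i)^-1 / \sum_(j < n) (Emad r j)^-1).
Proof.
have Epos : forall k, 0 < Emad r k.
  move=> k; have ge : 0 <= Emad r k.
    by rewrite /Emad divr_ge0 // ?ler0n //; apply: sumr_ge0 => t _.
  rewrite lt0r ge andbT; apply/negP => /eqP E0.
  have all0 : forall t, r k t - mu r k = 0.
    move: E0; rewrite /Emad => /eqP; rewrite mulf_eq0 invr_eq0 pnatr_eq0.
    case/orP => [/eqP S0 | /eqP T0] t.
      apply/eqP; rewrite -normr_eq0; apply/eqP.
      by move/psumr_eq0P: S0 => ->.
    by have := ltn_ord t; rewrite {2}T0.
  have hx0 : forall i : 'I_n, 0 <= (if i == k then 1 else 0 : R).
    by move=> i; case: (i == k).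
  have ht : forall t : 'I_T, \sum_(i < n) (r i t - mu r i) * (if i == k then 1 else 0 : R) = 0.
    move=> t; rewrite (bigD1 k) //= eqxx all0 mul0r add0r.
    by apply: big1 => i /negbTE ->; rewrite mulr0.
  move: (hnondeg _ hx0 ht k); rewrite /= eqxx => /eqP; by rewrite oner_eq0.
have Spos : 0 < \sum_(j < n) (Emad r j)^-1.
  rewrite (bigD1 (Ordinal hn)) //=; apply: ltr_pwDl.
    by rewrite invr_gt0.
  by apply: sumr_ge0 => j _; rewrite invr_ge0 ltW.
move=> x; split.
- move=> [[x0 x1] [s [hs [lam hl]]]].
  have key : forall (y : 'I_n -> R), (forall i, 0 <= y i) ->
      \sum_i (s i - Emad r i) * (y i - x i) <= 0.
    move=> y hy; have := hs y.
    rewrite (@MAD_eq R n T r hsign _ x0) (@MAD_eq R n T r hsign _ hy).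
    have -> : \sum_i (s i - Emad r i) * (y i - x i) =
      \sum_i Emad r i * x i + \sum_i s i * (y i - x i) - \sum_i Emad r i * y i.
      rewrite -big_split /= -sumrB; apply: eq_bigr => i _; ring.
    by rewrite subr_le0.
  have sEq : forall j, 0 < x j -> s j = Emad r j.
    move=> j xj.
    have p1 : forall i, 0 <= x i + (i == j)%:R.
      by move=> i; apply: addr_ge0 => //; rewrite ler0n.
    have p2 : forall i, 0 <= (if i == j then 0 else x i).
      by move=> i; case: (i == j).
    have h1 := key _ p1.
    have h2 := key _ p2.
    rewrite (bigD1 j) //= big1 ?addr0 in h1; last first.
      by move=> i /negbTE ->; rewrite addr0 subrr mulr0.
    rewrite (bigD1 j) //= big1 ?addr0 in h2; last first.
      by move=> i /negbTE ->; rewrite subrr mulr0.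
    rewrite eqxx addrAC subrr add0r mulr1 in h1.
    rewrite eqxx sub0r mulrN oppr_le0 in h2.
    apply/eqP; rewrite -subr_eq0 eq_le h1 /=.
    by rewrite pmulr_lge0 // in h2.
  have [k xk] : exists k, 0 < x k.
    case: (boolP [exists k, 0 < x k]) => [/existsP // | /existsPn hall].
    have : \sum_i x i = 0.
      apply: big1 => i _; apply/eqP; rewrite eq_le x0 andbT.
      by rewrite leNgt hall.
    by rewrite x1 => /eqP; rewrite oner_eq0.
  have lpos : 0 < lam by rewrite -(hl k) (sEq k xk) mulr_gt0.
  have xpos : forall i, 0 < x i.
    move=> i; rewrite lt0r x0 andbT; apply/negP => /eqP xi0.
    by move: (hl i); rewrite xi0 mul0r => E; move: lpos; rewrite -E ltxx.
  have xi : forall i, x i = lam / Emad r i.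
    move=> i; rewrite -(hl i) (sEq i (xpos i)) mulfK //.
    by rewrite gt_eqF.
  have lamE : lam = (\sum_(j < n) (Emad r j)^-1)^-1.
    move: x1; under eq_bigr do rewrite xi.
    rewrite -mulr_sumr => h.
    by rewrite -[lam]mulr1 -(mulfV (negbT (gt_eqF Spos))) mulrA h mul1r.
  by move=> i; rewrite xi lamE mulrC.
- move=> hx.
  have x0 : forall i, 0 <= x i.
    by move=> i; rewrite hx divr_ge0 // ?invr_ge0 ltW.
  split; first split => //.
    rewrite (eq_bigr _ (fun i _ => hx i)) -mulr_suml mulfV //.
    by rewrite gt_eqF.
  exists (Emad r); split.
    move=> y; rewrite (@MAD_eq R n T r hsign _ x0).
    apply: le_trans (@MAD_ge R n T r hsign y).
    rewrite -big_split /= le_eqVlt; apply/orP; left; apply/eqP.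
    by apply: eq_bigr => i _; ring.
  exists (\sum_(j < n) (Emad r j)^-1)^-1 => i.
  rewrite hx mulrAC mulVf ?mul1r //.
  by rewrite gt_eqF.
Qed.
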